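(* Assume the setting described in the context. For any word $W$ over $F$ there exists a sequence of valid swaps transforming $W$ into a $\pi$-stable word.
   Context: Setting: $F$ is a finite set with a symmetric relation $\sim$ (loops allowed), $\Gamma(f)=\{g:f\sim g\}$, $\Gamma^+(f)=\Gamma(f)\cup\{f\}$ and $\Gamma^+(S)=\bigcup_{f\in S}\Gamma^+(f)$. Write $f\cong g$ if $f\sim g$ or $f=g$. $S\subseteq F$ is independent if $f\not\sim g$ for distinct $f,g\in S$; $\mathrm{Ind}(F)$ is the family of independent sets. $\pi$ is a permutation of $F$ inducing a total order $\preceq_\pi$. A word is a finite sequence of elements of $F$. A valid swap on a word replaces two adjacent letters $fg$ by $gf$, provided $f\not\cong g$. A sequence $(I_1,\ldots,I_s)$, $s\ge1$, is stable if $I_r\in\mathrm{Ind}(F)$ and $I_{r+1}\subseteq\Gamma^+(I_r)$ for $r\in[s-1]$. A word $W$ is stable if it can be partitioned as $W=W_1\ldots W_s$ into nonempty words, each consisting of distinct letters, such that $(I_1,\ldots,I_s)$ is stable, where $I_r$ is the set of letters of $W_r$. It is $\pi$-stable if in addition each $W_r$ is strictly $\prec_\pi$-increasing. The empty word is regarded as $\pi$-stable. *)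

(* Defs.v *)
From mathcomp Require Import all_boot all_order all_fingroup.
Set Implicit Arguments. Unset Strict Implicit. Unset Printing Implicit Defensive.

Section Defs.
Variable F : finType.
Variable rel_F : rel F.   (* the symmetric relation ~ (loops allowed) *)

Definition cong (f g : F) : bool := rel_F f g || (f == g).

Definition GammaPlus (S : {set F}) : {set F} :=
  [set g | [exists f in S, cong f g]].

Definition independent (S : {set F}) : Prop :=
  forall f g, f \in S -> g \in S -> f != g -> ~~ rel_F f g.

Definition stable_seq (Is : seq {set F}) : Prop :=
  Is != [::] /\
  (forall I, I \in Is -> independent I) /\
  (forall r, r.+1 < size Is -> nth set0 Is r.+1 \subset GammaPlus (nth set0 Is r)).

Definition valid_swap (W W' : seq F) : Prop :=
  exists u v f g, W = u ++ f :: g :: v /\ W' = u ++ g :: f :: v /\ ~~ cong f g.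

Inductive swaps : seq F -> seq F -> Prop :=
| swaps_refl W : swaps W W
| swaps_step W1 W2 W3 : valid_swap W1 W2 -> swaps W2 W3 -> swaps W1 W3.

(* The total order induced by pi : f ≺_pi g iff f occurs before g in the listing
   (pi x_1, ..., pi x_n), where x_1,...,x_n is the canonical enumeration of F. *)
Definition prec_pi (pi : {perm F}) (f g : F) : bool :=
  (enum_rank ((pi^-1)%g f) < enum_rank ((pi^-1)%g g))%N.

Definition stable_word (W : seq F) : Prop :=
  exists Ws : seq (seq F),
    flatten Ws = W /\
    (forall w, w \in Ws -> w != [::] /\ uniq w) /\
    stable_seq [seq [set x in w] | w <- Ws].

Definition pi_stable_word (pi : {perm F}) (W : seq F) : Prop :=
  W = [::] \/
  exists Ws : seq (seq F),
    flatten Ws = W /\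
    (forall w, w \in Ws -> w != [::] /\ uniq w /\ sorted (prec_pi pi) w) /\
    stable_seq [seq [set x in w] | w <- Ws].

End Defs.

(* Main.v *)
Require Import Defs.
From mathcomp Require Import all_boot all_order all_fingroup zify.
Set Implicit Arguments. Unset Strict Implicit. Unset Printing Implicit Defensive.

Section Aux.
Variable F : finType.
Variable rel_F : rel F.
Hypothesis rel_sym : symmetric rel_F.
Variable pi : {perm F}.

Local Notation cong := (cong rel_F).
Local Notation swaps := (swaps rel_F).
Local Notation lt := (prec_pi pi).

Lemma swaps_trans A B C : swaps A B -> swaps B C -> swaps A C.
Proof.
elim=> [//|W1 W2 W3 H _ IH] HC; exact: swaps_step H (IH HC).
Qed.

Lemma swaps_app A B t : swaps A B -> swaps (A ++ t) (B ++ t).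
Proof.
elim=> [W|W1 W2 W3 [u [v [f [g [E1 [E2 Hc]]]]]] _ IH]; first exact: swaps_refl.
apply: swaps_step IH; exists u, (v ++ t), f, g.
by rewrite E1 E2 -!catA.
Qed.

Lemma move_left s u v x : (forall y, y \in s -> ~~ cong y x) ->
  swaps (u ++ s ++ x :: v) (u ++ x :: s ++ v).
Proof.
elim: s u => [|y s IH] u Hs /=; first exact: swaps_refl.
have := IH (rcons u y) (fun z hz => Hs z (mem_behead (s:=y::s) hz)).
rewrite -cats1 -!catA /= => H.
apply: swaps_trans H _; apply: swaps_step (swaps_refl _ _).
exists u, (s ++ v), y, x; split=> //; split=> //.
by apply: Hs; rewrite inE eqxx.
Qed.

Lemma lt_trans : transitive lt.
Proof. move=> a b c; rewrite /prec_pi; exact: ltn_trans. Qed.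

Lemma lt_irr a : ~~ lt a a.
Proof. by rewrite /prec_pi ltnn. Qed.

Lemma lt_total a b : a != b -> lt a b || lt b a.
Proof.
move=> nab; rewrite /prec_pi -neq_ltn.
apply: contra nab => /eqP/val_inj/enum_rank_inj/perm_inj ->; by [].
Qed.

Definition R (B C : seq F) : bool :=
  [set y in C] \subset GammaPlus rel_F [set y in B].

Definition Inv (Ws : seq (seq F)) : Prop :=
  (forall w, w \in Ws -> [/\ w != [::], uniq w, sorted lt w &
      independent rel_F [set y in w]]) /\ sorted R Ws.

Lemma GammaPlus_mono (A B : {set F}) : A \subset B -> GammaPlus rel_F A \subset GammaPlus rel_F B.
Proof.
move/subsetP=> AB; apply/subsetP=> y; rewrite !inE => /existsP [f /andP [fA c]].
by apply/existsP; exists f; rewrite AB.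
Qed.

Lemma path_mono_head b b' s : path R b s ->
  [set y in b] \subset [set y in b'] -> path R b' s.
Proof.
case: s => [//|c s] /= /andP [Rbc ->] sub; rewrite andbT.
exact: subset_trans Rbc (GammaPlus_mono sub).
Qed.

Lemma decomp (p : pred (seq F)) Ws : exists Ws1 Ws2, [/\ Ws = Ws1 ++ Ws2,
   all (predC p) Ws2 & (Ws1 = [::] \/ p (last [::] Ws1))].
Proof.
elim/last_ind: Ws => [|Ws B [Ws1 [Ws2 [E A L]]]].
  by exists [::], [::]; split=> //; left.
case pB: (p B).
  exists (rcons Ws B), [::]; split; [by rewrite cats0| by [] |].
  by right; rewrite last_rcons.
exists Ws1, (rcons Ws2 B); split.
- by rewrite E rcons_cat.
- by rewrite -cats1 all_cat A /= pB.
- by [].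
Qed.


Lemma in_flat_all (p : pred (seq F)) Ws y :
  all (predC p) Ws -> y \in flatten Ws -> exists2 B, B \in Ws & (~~ p B /\ y \in B).
Proof.
move=> /allP A /flattenP [B BW yB]; exists B => //; split=> //; exact: A.
Qed.

Lemma insert Ws x : Inv Ws ->
  exists Ws', swaps (flatten Ws ++ [:: x]) (flatten Ws') /\ Inv Ws'.
Proof.
move=> [HB HS].
have [Ws1 [Ws2 [E A L]]] := decomp (fun B => has (fun y => cong y x) B) Ws.
have Hnc : forall y, y \in flatten Ws2 -> ~~ cong y x.
  move=> y /(in_flat_all A) [B _ [/hasPn nB yB]]; exact: nB.
case: Ws2 E A Hnc => [|B Ws3] E A Hnc.
- exists (Ws1 ++ [:: [:: x]]); split.
    by rewrite E cats0 flatten_cat /=; apply: swaps_refl.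
  split.
    move=> w; rewrite mem_cat inE => /orP [wW|/eqP ->].
      by apply: HB; rewrite E cats0.
    split=> //; move=> f g; rewrite !inE => /eqP -> /eqP ->; by rewrite eqxx.
  move: HS; rewrite E cats0; clear E HB; case: L => [->|].
    by [].
  case: Ws1 => [//|a s] /= Hl.
  rewrite cats1 rcons_path => ->; rewrite /R /=.
  apply/subsetP => y; rewrite !inE => /eqP ->.
  have [f fl c] := hasP Hl.
  by apply/existsP; exists f; rewrite inE fl.
- set n := find (fun y => ~~ lt y x) B.
  set B' := take n B ++ x :: drop n B.
  have nBx : forall y, y \in B -> ~~ cong y x.
    by move=> y yB; apply: Hnc; rewrite /= mem_cat yB.
  have xnB : x \notin B.
    by apply/negP => xB; move: (nBx _ xB); rewrite /cong eqxx orbT.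
  have permB : perm_eq B' (x :: B).
    by rewrite /B' -(cat1s x (drop n B)) perm_catCA /= cat_take_drop.
  have memB' : forall y, (y \in B') = (y == x) || (y \in B).
    by move=> y; rewrite (perm_mem permB) inE.
  have HBB : [/\ B != [::], uniq B, sorted lt B & independent rel_F [set y in B]].
    by apply: HB; rewrite E mem_cat inE eqxx orbT.
  case: HBB => Bne Bu Bs Bi.
  exists (Ws1 ++ B' :: Ws3); split.
    rewrite E !flatten_cat /= -{1}(cat_take_drop n B).
    have := @move_left (drop n B ++ flatten Ws3) (flatten Ws1 ++ take n B) [::] x.
    rewrite cats0 /B' /= -!catA /=; apply.
    move=> y; rewrite mem_cat => /orP [/mem_drop yB|y3]; first exact: nBx.
    by apply: Hnc; rewrite /= mem_cat y3 orbT.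
  split.
    move=> w; rewrite mem_cat inE => /or3P [w1|/eqP ->|w3].
    + by apply: HB; rewrite E mem_cat w1.
    + split.
      * by rewrite /B'; case: (take n B).
      * by rewrite (perm_uniq permB) /= xnB Bu.
      * rewrite sorted_pairwise; last exact: lt_trans.
        have Bp : pairwise lt B by rewrite -sorted_pairwise //; exact: lt_trans.
        move: (Bp); rewrite -(cat_take_drop n B) pairwise_cat => /and3P [Ar Pt Pd].
        have tx : all (fun y => lt y x) (take n B).
          apply/allP => y /(nthP x) [i hi <-].
          have hin : i < n by move: hi; rewrite size_take; case: (ltnP n (size B)) => Hs hi2; [exact: hi2 | exact: leq_trans hi2 Hs].
          rewrite nth_take //; have := before_find x hin; by case: (lt _ x).
        have dx : all (lt x) (drop n B).
          case Ed: (drop n B) => [//|z r].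
          have zB : z \in B by rewrite -(cat_take_drop n B) mem_cat Ed inE eqxx orbT.
          have hasB : has (fun y => ~~ lt y x) B.
            by rewrite has_find -/n -subn_gt0 -size_drop Ed.
          have nz : ~~ lt z x.
            have := nth_find x hasB; rewrite -/n.
            by have := nth_drop n x B 0; rewrite Ed addn0 /= => <-.
          have xz : lt x z.
            have := @lt_total z x; rewrite (negbTE nz) /=; apply.
            by apply/eqP => zx; move: xnB; rewrite -zx zB.
          rewrite /= xz /=; apply/allP => y yr.
          move: Pd; rewrite Ed /= => /andP [/allP zr _].
          exact: lt_trans xz (zr _ yr).
        rewrite pairwise_cat Pt /= dx Pd /= andbT.
        apply/allrelP => a b aT; rewrite inE => /orP [/eqP ->|bD].
          exact: (allP tx).
        exact: (allrelP Ar).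
      * move=> f g; rewrite !inE !memB' => /orP [/eqP ->|fB] /orP [/eqP ->|gB] //.
        - by rewrite eqxx.
        - move=> _; have := nBx _ gB; rewrite /cong rel_sym; by case: (rel_F x g).
        - move=> _; have := nBx _ fB; rewrite /cong; by case: (rel_F f x).
        - by apply: Bi; rewrite inE.
    + by apply: HB; rewrite E mem_cat inE w3 !orbT.
  have subB : [set y in B] \subset [set y in B'].
    by apply/subsetP => y; rewrite !inE memB' => ->; rewrite orbT.
  move: HS; rewrite E; clear E HB A Hnc.
  case: Ws1 L => [_|a s L] /=.
    move=> H; exact: path_mono_head H subB.
  rewrite !cat_path /= => /and3P [-> Rl Hp] /=.
  rewrite (path_mono_head Hp subB) andbT.
  apply/subsetP => y; rewrite inE memB' => /orP [/eqP ->|yB].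
    case: L => // Hl; have [f fl c] := hasP Hl.
    by rewrite inE; apply/existsP; exists f; rewrite inE fl.
  by apply: (subsetP Rl); rewrite inE.
Qed.

End Aux.

Theorem lemma4 (F : finType) (rel_F : rel F) (rel_sym : symmetric rel_F)
  (pi : {perm F}) (W : seq F) :
  exists W' : seq F, swaps rel_F W W' /\ pi_stable_word rel_F pi W'.
Proof.
have main : exists Ws, swaps rel_F W (flatten Ws) /\ Inv rel_F pi Ws.
  elim/last_ind: W => [|W x [Ws [Hs HI]]].
    exists [::]; split; first exact: swaps_refl.
    by split.
  have [Ws' [Hs' HI']] := insert rel_sym x HI.
  exists Ws'; split=> //.
  rewrite -cats1; apply: swaps_trans Hs'; exact: swaps_app.
have [Ws [Hs [HB HS]]] := main.
exists (flatten Ws); split=> //.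
case: Ws HB HS Hs => [|w0 Ws0] HB HS Hs; first by left.
right; exists (w0 :: Ws0); split=> //; split.
  by move=> w /HB [? ? ? _].
split; first by [].
split.
  move=> I /mapP [w /HB [] _ _ _ Hi ->]; exact: Hi.
move=> r; rewrite size_map => hr.
rewrite (nth_map [::]) // (nth_map [::]); last exact: ltnW.
exact: (sortedP [::] HS).
Qed.
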